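(* Let $S$ be a finite $p$-group for an odd prime $p$. Let $\mathfrak{X}_1(S)\leq S$ be the subgroup containing $\mathfrak{X}(S)$ such that $\mathfrak{X}_1(S)/\mathfrak{X}(S)=Z(S/\mathfrak{X}(S))$. Then $J(S)\leq \mathfrak{X}(S)$ if and only if $J(S)\leq \mathfrak{X}_1(S)$.
   Context: For a finite $p$-group $G$ and subgroups $A,B$, write $[A,B;1]=[A,B]$ and $[A,B;k]=[[A,B;k-1],B]$. $\Omega_1(G)$ denotes the subgroup generated by the elements of order $p$ in $G$. The Oliver subgroup $\mathfrak{X}(G)$ of a finite $p$-group $G$ is the unique largest normal subgroup $K$ of $G$ admitting a chain $1=Q_0\leq Q_1\leq\cdots\leq Q_n=K$ of normal subgroups $Q_i\unlhd G$ such that $[\Omega_1(C_G(Q_{i-1})),Q_i;p-1]=1$ for each $1\leq i\leq n$. $J(S)$ is the Thompson subgroup of $S$: the subgroup generated by all elementary abelian $p$-subgroups of $S$ whose rank equals the $p$-rank of $S$ (the largest rank of an elementary abelian $p$-subgroup of $S$). *)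

(* Defs.v *)
From mathcomp Require Import all_boot all_fingroup all_solvable.
Set Implicit Arguments.
Unset Strict Implicit.
Unset Printing Implicit Defensive.
Local Open Scope group_scope.

(* Iterated commutator: [A,B;1] = [A,B], [A,B;k] = [[A,B;k-1],B];
   comm_iter A B k = [A,B;k] for k >= 1 (and comm_iter A B 0 = A). *)
Definition comm_iter (gT : finGroupType) (A B : {set gT}) (k : nat) : {set gT} :=
  iter k (fun X => [~: X, B]) A.

Definition oliver_admissible (gT : finGroupType) (p : nat) (G K : {group gT}) : Prop :=
  exists (n : nat) (Q : nat -> {group gT}),
    [/\ Q 0 = 1%G, Q n = K,
        (forall i, i <= n -> Q i <| G),
        (forall i, i < n -> Q i \subset Q i.+1) &
        (forall i, i < n ->
           comm_iter ('Ohm_1('C_G(Q i))) (Q i.+1) p.-1 = 1)].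

Definition is_oliver_subgroup (gT : finGroupType) (p : nat) (G X : {group gT}) : Prop :=
  X <| G /\ oliver_admissible p G X /\
  (forall K : {group gT}, K <| G -> oliver_admissible p G K -> K \subset X).

Definition thompson_subgroup (gT : finGroupType) (p : nat) (G : {set gT}) : {set gT} :=
  <<\bigcup_(E in 'E_p^('r_p(G))(G)) E>>.

(* Main.v *)
Require Import Defs.
From mathcomp Require Import all_boot all_fingroup all_solvable.
Local Open Scope group_scope.
Set Implicit Arguments.
Unset Strict Implicit.

Lemma abelem_join (gT : finGroupType) p (G H : {group gT}) :
  prime p -> p.-abelem G -> p.-abelem H -> H \subset 'C(G) -> p.-abelem (G <*> H).
Proof.
move=> pr aG aH cGH.
have /(abelemP pr)[abG eG] := aG.
have /(abelemP pr)[abH eH] := aH.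
apply/(abelemP pr); split.
  by rewrite abelianY abG abH cGH.
move=> x; rewrite /= (cent_joinEr cGH) => /mulsgP[g h Gg Hh ->].
have cgh : commute g h by apply: esym; apply: (centsP cGH h Hh g Gg).
by rewrite expgMn // eG // eH // mulg1.
Qed.

Lemma maxrank_sub (gT : finGroupType) p (S A U : {group gT}) :
  prime p -> A \in 'E_p^('r_p(S))(S) -> U \subset S -> p.-abelem U ->
  U \subset 'C(A) -> U \subset A.
Proof.
move=> pr /pnElemP[sAS aA lA] sUS aU cAU.
have aE := abelem_join pr aA aU cAU.
have sES : A <*> U \subset S by rewrite join_subG sAS.
have lE : logn p #|A <*> U| <= logn p #|A|.
  by rewrite -(p_rank_abelem aE) lA p_rankS.
have sAE : A \subset A <*> U := joing_subl _ _.
have: #|A <*> U| <= #|A|.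
  rewrite (card_pgroup (abelem_pgroup aE)) (card_pgroup (abelem_pgroup aA)).
  by rewrite leq_exp2l // prime_gt1.
move=> le; have /eqP eAE : A :==: A <*> U by rewrite eqEcard sAE le.
by rewrite eAE joing_subr.
Qed.

Lemma maxrank_ge (gT : finGroupType) p (S A E : {group gT}) :
  prime p -> A \in 'E_p^('r_p(S))(S) -> E \subset S -> p.-abelem E ->
  #|A| <= #|E| -> E \in 'E_p^('r_p(S))(S).
Proof.
move=> pr /pnElemP[sAS aA lA] sES aE le.
apply/pnElemP; split => //.
rewrite -(p_rank_abelem aE); apply/eqP; rewrite eqn_leq p_rankS //=.
rewrite -lA (p_rank_abelem aE) -(leq_exp2l _ _ (prime_gt1 pr)).
by rewrite -(card_pgroup (abelem_pgroup aE)) -(card_pgroup (abelem_pgroup aA)).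
Qed.

Lemma comm_iter_quad (gT : finGroupType) (W Q : {set gT}) k :
  [~: [~: W, Q], Q] = 1 -> 1 < k -> comm_iter W Q k = 1.
Proof.
move=> h; case: k => // [[|k]] // _; elim: k => [|k IH] //=.
by rewrite /comm_iter /= in IH *; rewrite IH comm1G.
Qed.
Lemma oliver_ext (gT : finGroupType) p (S X Q : {group gT}) :
  is_oliver_subgroup p S X -> Q <| S -> X \subset Q ->
  comm_iter ('Ohm_1('C_S(X))) Q p.-1 = 1 -> Q \subset X.
Proof.
move=> [nXS [[n [Qs [Q0 Qn Qnorm Qinc Qcomm]]] Hmax]] nQS sXQ hc.
apply: Hmax => //.
exists n.+1, (fun i => if i <= n then Qs i else Q); split.
- by rewrite leq0n.
- by rewrite ltnn.
- move=> i _; case: ifP => // le; exact: Qnorm.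
- move=> i; rewrite ltnS => le; rewrite le.
  have [lt|ge] := ltnP i n; first exact: Qinc.
  have -> : i = n by apply/eqP; rewrite eqn_leq le ge.
  by rewrite ?ltnn Qn.
- move=> i; rewrite ltnS => le; rewrite le.
  have [lt|ge] := ltnP i n; first exact: Qcomm.
  have -> : i = n by apply/eqP; rewrite eqn_leq le ge.
  by rewrite ?ltnn Qn.
Qed.

Lemma joinY_normal (gT : finGroupType) (S Y B : {group gT}) :
  Y <| S -> B \subset S -> [~: B, S] \subset Y -> Y <*> B <| S.
Proof.
move=> /andP[sYS nYS] sBS cBS.
rewrite /normal join_subG sYS sBS /=.
apply/normsP => s Ss.
apply/eqP; rewrite eqEcard cardJg leqnn andbT conjYg (normsP nYS s Ss).
rewrite join_subG joing_subl /=.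
apply/subsetP => _ /imsetP[b Bb ->].
rewrite conjg_mulR groupM //; first by rewrite mem_gen // inE Bb orbT.
by rewrite mem_gen // inE (subsetP cBS) ?orTb // mem_commg.
Qed.

Lemma comm_join_sub (gT : finGroupType) (V Y B : {group gT}) :
  V \subset 'C(Y) -> B \subset 'N(Y) -> 
  [~: V, Y <*> B] \subset [~: V, B].
Proof.
move=> cVY nYB.
rewrite norm_joinEr // gen_subG.
apply/subsetP => _ /imset2P[v q Vv /mulsgP[y b Yy Bb ->] ->].
have cvy : commute v y := centsP cVY v Vv y Yy.
have e : [~ v, y] = 1 by apply/eqP/commgP.
by rewrite commgMJ e conj1g mulg1 mem_commg.
Qed.

Lemma quad_join (gT : finGroupType) (V Y B : {group gT}) :
  V \subset 'C(Y) -> B \subset 'N(Y) -> B \subset 'N(V) -> Y \subset 'N(V) ->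
  [~: [~: V, B], B] = 1 -> [~: [~: V, Y <*> B], Y <*> B] = 1.
Proof.
move=> cVY nYB nVB nVY h; apply/trivgP.
have s1 := comm_join_sub cVY nYB.
have sVB : [~: V, B] \subset V by rewrite commg_subl.
have cVBY : [~: V, B] \subset 'C(Y) := subset_trans sVB cVY.
rewrite -h; apply: subset_trans (commSg _ s1) _.
exact: (comm_join_sub (V := [~: V, B]%G) cVBY nYB).
Qed.

Lemma X1_comm (gT : finGroupType) (S X X1 : {group gT}) :
  X <| S -> X1 \subset S -> X1 / X = 'Z(S / X) -> [~: X1, S] \subset X.
Proof.
move=> /andP[sXS nXS] sX1S eZ.
rewrite -quotient_cents2 ?(subset_trans sX1S) //.
by rewrite eZ subsetIr.
Qed.

Lemma comm_swap (gT : finGroupType) (V : {group gT}) x a c :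
  abelian V -> x \in V -> a \in 'N(V) -> c \in 'N(V) -> commute a c ->
  [~ [~ x, c], a] = [~ [~ x, a], c].
Proof.
move=> abV Vx Na Nc cac.
have Vxa : x ^ a \in V by rewrite memJ_norm.
have Vxc : x ^ c \in V by rewrite memJ_norm.
have Vxac : x ^ (a * c) \in V by rewrite memJ_norm ?groupM.
have cm : forall u v, u \in V -> v \in V -> commute u v.
  by move=> u v Vu Vv; apply: (centsP abV).
rewrite !commgEl.
rewrite [(_ * x ^ c) ^ a]conjMg [(_ * x ^ a) ^ c]conjMg !conjVg -!conjgM cac.
have Vz : x ^ (c * a) \in V by rewrite memJ_norm ?groupM.
set u := x ^ c; set w := x ^ a; set z := x ^ (c * a).
have Vu : u^-1 \in V by rewrite groupV /u memJ_norm.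
have Vw : w^-1 \in V by rewrite groupV /w memJ_norm.
clearbody u w z.
rewrite !invMg invgK !mulgA.
congr (_ * z).
rewrite (cm u^-1 x) // -mulgA (cm u^-1 w^-1) // mulgA (cm x w^-1) //.
Qed.


Lemma replacement (gT : finGroupType) p (S Y V : {group gT}) :
  prime p -> p.-group S -> p.-abelem V -> V \subset S -> S \subset 'N(V) ->
  Y \subset 'C(V) ->
  (forall A : {group gT}, A \in 'E_p^('r_p(S))(S) ->
      [~: [~: V, A], A] = 1 -> A \subset Y) ->
  forall A : {group gT}, A \in 'E_p^('r_p(S))(S) -> A \subset Y.
Proof.
move=> pr pS aV sVS nVS cYV quadY A0 EA0.
apply: contraT => nA0Y.
pose P := fun A : {group gT} => (A \in 'E_p^('r_p(S))(S)) && ~~ (A \subset Y).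
have PA0 : P A0 by rewrite /P EA0.
case: (@arg_maxnP _ A0 P (fun A : {group gT} => #|A :&: V|) PA0) => A /andP[EA nAY] maxA.
have /pnElemP[sAS aA _] := EA.
have abA : abelian A := abelem_abelian aA.
have abV : abelian V := abelem_abelian aV.
have nVA : A \subset 'N(V) := subset_trans sAS nVS.
have nq : [~: [~: V, A], A] != 1 by apply: contraNneq nAY; apply: quadY.
pose D k := comm_iter V A k.
have DS : forall k, D k.+1 = [~: D k, A] by [].
have sDV : forall k, D k \subset V.
  elim=> [|k IH]; first exact: subxx.
  rewrite DS; apply: subset_trans (commSg _ IH) _; by rewrite commg_subl.
have [n Ln] : exists n, 'L_n.+1(S) = 1 by apply/lcnP; exact: pgroup_nil pS.
have sDL : forall k, D k \subset 'L_k.+1(S).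
  elim=> [|k IH]; first by rewrite lcn1.
  by rewrite DS lcnSn; apply: commgSS.
have Dn : D n.+1 = 1.
  rewrite DS; apply/trivgP; rewrite -(comm1G A); apply: commSg.
  by rewrite -Ln sDL.
have Dnm : forall m, D (m + n.+1) = 1.
  by elim=> [|m IH] //; rewrite addSn DS IH comm1G.
have exP : exists j, D j.+2 != 1 by exists 0.
have ubP : forall j, D j.+2 != 1 -> j <= n.
  move=> j; apply: contraR; rewrite -ltnNge => lt.
  have le : n.+1 <= j.+2 by rewrite ltnS; apply: leq_trans (ltnW lt) (leqnSn j).
  by have := Dnm (j.+2 - n.+1); rewrite subnK // => ->; rewrite eqxx.
case: (ex_maxnP exP ubP) => j Dj maxj.
have Dj3 : D j.+3 = 1.
  by apply/eqP; apply: contraT => h; have := maxj _ h; rewrite ltnn.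
pose C1 := 'C_V(A).
have sC1V : C1 \subset V := subsetIl _ _.
have cC1A : C1 \subset 'C(A) := subsetIr _ _.
have sDjC1 : D j.+2 \subset C1.
  by rewrite subsetI sDV; apply/commG1P; exact: Dj3.
have nC1V : V \subset 'N(C1) := sub_abelian_norm abV sC1V.
have nC1A : A \subset 'N(C1) := normsI nVA (norms_cent (normG A)).
have sAVC1 : A :&: V \subset C1.
  by rewrite subsetI subsetIr /=; apply: subset_trans (subsetIl _ _) abA.
have : ~~ ([~: D j, A] \subset C1).
  apply: contra Dj => sub; apply/eqP.
  have e1 : [~: C1, A] = 1 := commG1P cC1A.
  rewrite 2!DS; apply/trivgP; rewrite -e1; exact: commSg sub.
rewrite gen_subG => /subsetPn[_ /imset2P[x a0 Djx Aa0 ->] nxa0].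
have Vx : x \in V := subsetP (sDV j) x Djx.
have VxA : forall a, a \in A -> [~ x, a] \in V.
  by move=> a Aa; apply: (subsetP (sDV j.+1)); rewrite DS mem_commg.
have P2 : forall a b, a \in A -> b \in A -> [~ [~ x, a], b] \in C1.
  by move=> a b Aa Ab; apply: (subsetP sDjC1); rewrite 2!DS !mem_commg.
pose X0 := [set [~ x, a] | a in A].
pose B1 := <<X0>>%G.
have sX0V : X0 \subset V by apply/subsetP => _ /imsetP[a Aa ->]; exact: VxA.
have sB1V : B1 \subset V by rewrite gen_subG.
have nC1X0 : X0 \subset 'N(C1) := subset_trans sX0V nC1V.
have nC1B1 : B1 \subset 'N(C1) := subset_trans sB1V nC1V.
have cB1A : [~: B1, A] \subset C1.
  rewrite -quotient_cents2 // quotient_gen // gen_subG.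
  rewrite quotient_cents2 // gen_subG.
  by apply/subsetP => _ /imset2P[_ b /imsetP[a Aa ->] Ab ->]; exact: P2.
pose psi := fun a => coset C1 [~ x, a].
have psiM : {in A &, {morph psi : a b / a * b}}.
  move=> a b Aa Ab; rewrite /psi commgMJ conjg_mulR.
  have Nxa := subsetP nC1V _ (VxA a Aa).
  have Nxb := subsetP nC1V _ (VxA b Ab).
  have Nxab := subsetP nC1V _ (subsetP sC1V _ (P2 a b Aa Ab)).
  rewrite mulgA (coset_kerr _ (P2 a b Aa Ab)) coset_morphM //.
  rewrite -coset_morphM //.
  have cab : commute [~ x, b] [~ x, a] := centsP abV _ (VxA b Ab) _ (VxA a Aa).
  by rewrite cab -coset_morphM.
pose psim := Morphism psiM.
pose K := (A :&: 'ker psim)%G.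
have sKA : K \subset A := subsetIl _ _.
have sKC : K \subset 'C_A(B1).
  apply/subsetP => a /setIP[Aa Ka].
  have : psim a = 1 by apply/kerP.
  rewrite /= /psi => /(coset_idr (subsetP nC1V _ (VxA a Aa))) xaC1.
  rewrite inE Aa cent_gen; apply/centP => _ /imsetP[c Ac ->].
  apply: commute_sym; apply/commgP; rewrite (comm_swap abV Vx) ?(subsetP nVA) //.
    by apply/commgP; exact: (centP (subsetP cC1A _ xaC1) c Ac).
  exact: (centsP abA).
have cardA : #|A| <= #|'C_A(B1)| * #|B1 : B1 :&: C1|.
  rewrite -(Lagrange sKA); apply: leq_mul; first exact: subset_leq_card.
  have -> : #|A : K| = #|psim @* A| by rewrite card_morphim setIid indexgI.
  have im : psim @* A \subset B1 / C1.
    rewrite morphimEdom; apply/subsetP => _ /imsetP[a Aa ->].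
    by rewrite /= /psi mem_quotient // mem_gen // imset_f.
  apply: leq_trans (subset_leq_card im) _.
  by rewrite card_quotient // indexgI.
have cCB : B1 \subset 'C('C_A(B1)) by rewrite centsC subsetIr.
have aC : p.-abelem 'C_A(B1) := abelemS (subsetIl _ _) aA.
have aB1 : p.-abelem B1 := abelemS sB1V aV.
pose As := ('C_A(B1) <*> B1)%G.
have aAs : p.-abelem As := abelem_join pr aC aB1 cCB.
have sAsS : As \subset S.
  by rewrite join_subG (subset_trans (subsetIl _ _) sAS) (subset_trans sB1V sVS).
have eAs : As :=: 'C_A(B1) * B1 := cent_joinEr cCB.
have sCB1 : 'C_A(B1) :&: B1 \subset B1 :&: C1.
  rewrite subsetI subsetIr /=; apply: subset_trans sAVC1.
  by rewrite setISS ?subsetIl.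
have card_le : #|A| <= #|As|.
  have h1 := mul_cardG ('C_A(B1))%G B1.
  have h2 := Lagrange (subsetIl B1 C1).
  have h3 := subset_leq_card sCB1.
  have pos : 0 < #|'C_A(B1) :&: B1| by rewrite cardG_gt0.
  rewrite eAs; apply: leq_trans cardA _.
  rewrite -(leq_pmul2r pos) -h1 -h2.
  rewrite -mulnA leq_mul2l; apply/orP; right.
  by rewrite mulnC; apply: leq_mul.
have EAs : As \in 'E_p^('r_p(S))(S) := maxrank_ge pr EA sAsS aAs card_le.
have nAsY : ~~ (As \subset Y).
  apply/negP => sAsY.
  have cVAs : V \subset 'C(As) by rewrite centsC (subset_trans sAsY cYV).
  have sVAs := maxrank_sub pr EAs sVS aV cVAs.
  have := subsetP sVAs x Vx; rewrite eAs => /mulsgP[c y Cc By exy].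
  have Ac : c \in A by case/setIP: Cc.
  have Vy : y \in V := subsetP sB1V y By.
  have Vc : c \in V by rewrite (_ : c = x * y^-1) ?groupM ?groupV // exy mulgK.
  have cC1 : c \in C1 by apply: (subsetP sAVC1); rewrite inE Ac Vc.
  have e : [~ x, a0] = [~ y, a0].
    rewrite exy commMgJ.
    have -> : [~ c, a0] = 1 by apply/eqP/commgP; exact: (centP (subsetP cC1A _ cC1) a0 Aa0).
    by rewrite conj1g mul1g.
  by move: nxa0; rewrite e (subsetP cB1A) // mem_commg.
have lt : #|A :&: V| < #|As :&: V|.
  apply: proper_card; apply/properP; split.
    apply/subsetP => y /setIP[Ay Vy]; rewrite inE Vy andbT.
    apply: (subsetP (joing_subl _ _)); rewrite inE Ay.
    exact: (subsetP (centsS sB1V abV)).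
  exists [~ x, a0].
    by rewrite inE VxA // andbT; apply: (subsetP (joing_subr _ _)); rewrite mem_gen // imset_f.
  by apply: contra nxa0; apply: (subsetP sAVC1).
have := maxA As; rewrite /P EAs nAsY => /(_ isT) /=.
by rewrite leqNgt lt.
Qed.

Unset Implicit Arguments.
Set Strict Implicit.

Theorem corollary1p3 (gT : finGroupType) (p : nat) (S X X1 : {group gT}) :
  prime p -> odd p -> p.-group S ->
  is_oliver_subgroup p S X ->
  X \subset X1 -> X1 \subset S -> X1 / X = 'Z(S / X) ->
  (thompson_subgroup p S \subset X) <-> (thompson_subgroup p S \subset X1).
Proof.
move=> pr oddp pS oX sXX1 sX1S eZ.
have nXS : X <| S by case: oX.
have nXS' : S \subset 'N(X) := normal_norm nXS.
have p3 : 1 < p.-1.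
  by have := prime_gt1 pr; case: (p) oddp => [|[|[|q]]].
have cX1S : [~: X1, S] \subset X := X1_comm nXS sX1S eZ.
split => [sJX | sJX1]; first exact: subset_trans sJX sXX1.
have EX1 : forall A : {group gT}, A \in 'E_p^('r_p(S))(S) -> A \subset X1.
  move=> A EA; apply: subset_trans sJX1; rewrite /thompson_subgroup sub_gen //.
  exact: (bigcup_sup A EA).
pose C := 'C_S(X).
have nCS : C <| S.
  by have := subcent_normal S X; rewrite (setIidPl nXS').
have sCS : C \subset S := subsetIl _ _.
have cCX : C \subset 'C(X) := subsetIr _ _.
have sCX1Y : C :&: X1 \subset X.
  pose B := (C :&: X1)%G.
  have sBS : B \subset S := subset_trans (subsetIr _ _) sX1S.
  have sBC : B \subset C := subsetIl _ _.
  apply: subset_trans (joing_subr X B) _.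
  apply: (oliver_ext oX).
  - exact: joinY_normal nXS sBS (subset_trans (commSg _ (subsetIr _ _)) cX1S).
  - exact: joing_subl.
  apply: comm_iter_quad p3.
  have sWC : 'Ohm_1(C) \subset C := Ohm_sub 1 _.
  have s1 := comm_join_sub (subset_trans sWC cCX) (subset_trans sBS nXS').
  pose Z0 := (C :&: X)%G.
  have s2 : [~: 'Ohm_1(C), B] \subset Z0.
    rewrite subsetI; apply/andP; split.
      apply: subset_trans (commgSS sWC sBC) _; by rewrite commg_subl normG.
    apply: subset_trans (commgSS (subset_trans sWC sCS) (subsetIr C X1)) _.
    by rewrite commGC.
  have cZQ : Z0 \subset 'C(X <*> B).
    rewrite centY subsetI (subset_trans (subsetIl _ _) cCX) /= centsC.
    apply: centsS (subsetIr C X) _; exact: subset_trans sBC cCX.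
  apply/trivgP; rewrite -(commG1P cZQ); apply: commSg.
  exact: subset_trans s1 s2.
have sCX : C \subset X.
  apply: contraT => nCX.
  have nCX' : C \subset 'N(X) := subset_trans sCS nXS'.
  have ntC : (C / X)%G != 1 :> {set _}.
    apply: contra nCX => /eqP e; by rewrite -quotient_sub1 // e.
  have := meet_center_nil (pgroup_nil (quotient_pgroup X pS)) (quotient_normal X nCS) ntC.
  rewrite /= -eZ setIC -quotientGI //.
  have : X1 :&: C \subset X by rewrite setIC.
  rewrite -quotient_sub1 ?(subset_trans (subsetIl _ _) (subset_trans sX1S nXS')) //.
  by move/trivgP => ->; rewrite eqxx.
have abC : abelian C := centsS sCX cCX.
pose V := 'Ohm_1(C).
have aV : p.-abelem V := Ohm1_abelem (pgroupS sCS pS) abC.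
have sVC : V \subset C := Ohm_sub 1 _.
have sVS : V \subset S := subset_trans sVC sCS.
have nVS : S \subset 'N(V) := normal_norm (char_normal_trans (Ohm_char 1 C) nCS).
have cYV : X \subset 'C(V) by rewrite centsC (subset_trans sVC cCX).
have quadY : forall A : {group gT}, A \in 'E_p^('r_p(S))(S) ->
      [~: [~: V, A], A] = 1 -> A \subset X.
  move=> A EA q; have sAX1 := EX1 A EA.
  have /pnElemP[sAS _ _] := EA.
  apply: subset_trans (joing_subr X A) _.
  apply: (oliver_ext oX).
  - exact: joinY_normal nXS sAS (subset_trans (commSg _ sAX1) cX1S).
  - exact: joing_subl.
  apply: comm_iter_quad p3.
  apply: quad_join q.
  - exact: subset_trans sVC cCX.
  - exact: subset_trans sAS nXS'.
  - exact: subset_trans sAS nVS.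
  - exact: subset_trans (normal_sub nXS) nVS.
have allA := replacement pr pS aV sVS nVS cYV quadY.
rewrite /thompson_subgroup gen_subG; apply/bigcupsP => A EA; exact: allA.
Qed.
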